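(* For $G,H,H'\in\mathfrak{D}$ and $\xi\in\mathcal{H}(G,H)$, let $$\Theta_{G,H'}(\xi)=\{\zeta\in\mathcal{H}(G,H'):\mathcal{G}(\zeta)=\mathcal{G}(\xi)\}.$$ Let $R,S\in\mathfrak{D}$ and $\mathfrak{D}'\subseteq\mathfrak{D}$. Then $R\sqsubseteq_\Gamma S$ with respect to $\mathfrak{D}'$ holds if and only if $$\#\Theta_{G,R}(\xi)\le\#\Theta_{G,S}(\xi)\quad\text{for all } G\in\mathfrak{D}' \text{ and all } \xi\in\mathcal{H}(G,R).$$
   Context: **Digraphs and homomorphisms.** - A digraph $G$ is a pair $(V(G),A(G))$, where $V(G)$ is a finite non-empty set and $A(G)\subseteq V(G)\times V(G)$. Arcs are written $vw$. - A homomorphism $\xi:G\to H$ is a map $V(G)\to V(H)$ with $\xi(v)\xi(w)\in A(H)$ for all $vw\in A(G)$. $\mathcal{H}(G,H)$ is the set of homomorphisms. - $\mathfrak{D}$ is the class of all digraphs. **Connectivity.** - Two vertices $u,w$ are adjacent if $uw\in A(G)$ or $wu\in A(G)$. - For $X\subseteq V(G)$ and $v,w\in X$, the vertices $v$ and $w$ are connected in $X$ if $v=w$, or if there are $z_0=v,\dots,z_I=w$ in $X$ with consecutive terms adjacent. - $\gamma_X(v)$ is the set of $w\in X$ connected to $v$ in $X$. - $\Gamma_\xi(v):=\gamma_{\xi^{-1}(\xi(v))}(v)$. **The quotient digraph.** For $\xi\in\mathcal{H}(G,H)$, $\mathcal{G}(\xi)$ is the digraph with: - vertex set $\{\Gamma_\xi(v):v\in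 V(G)\}$, a partition of $V(G)$; - arcs $\mathfrak{a}\mathfrak{b}$ whenever there are $a\in\mathfrak{a}$, $b\in\mathfrak{b}$ with $ab\in A(G)$. **Schemes.** - For a class $\mathfrak{D}'$, let $\mathfrak{D}'_r$ be a fixed system of representatives up to isomorphism. - A Hom-scheme from $R$ to $S$ with respect to $\mathfrak{D}'$ is a family of maps $\rho_G:\mathcal{H}(G,R)\to\mathcal{H}(G,S)$, $G\in\mathfrak{D}'_r$. - It is strong if all $\rho_G$ are injective. - It is a $\Gamma$-scheme if $\Gamma_{\rho_G(\xi)}(v)=\Gamma_\xi(v)$ for all $G\in\mathfrak{D}'_r$, $\xi\in\mathcal{H}(G,R)$ and $v\in V(G)$. - $R\sqsubseteq_\Gamma S$ with respect to $\mathfrak{D}'$ means that a strong $\Gamma$-scheme exists. *)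

(* Defs.v *)
From mathcomp Require Import all_boot.
Set Implicit Arguments. Unset Strict Implicit. Unset Printing Implicit Defensive.

Record digraph := Digraph {
  vert :> finType;
  arc : rel vert;
  vert_nonempty : 0 < #|vert| }.

Definition is_hom (G H : digraph) (f : {ffun G -> H}) : bool :=
  [forall v : G, forall w : G, arc v w ==> arc (f v) (f w)].

Definition homs (G H : digraph) := {f : {ffun G -> H} | is_hom f}.

Definition adj (G : digraph) : rel G := fun u w => arc u w || arc w u.

Definition gammaX (G : digraph) (X : {set G}) (v : G) : {set G} :=
  [set w in X | connect (fun x y => [&& x \in X, y \in X & adj x y]) v w].

Definition Gam (G H : digraph) (xi : G -> H) (v : G) : {set G} :=
  gammaX [set u : G | xi u == xi v] v.

Definition qverts (G H : digraph) (xi : G -> H) : {set {set G}} :=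
  [set Gam xi v | v : G].

Definition qarcs (G H : digraph) (xi : G -> H) : {set {set G} * {set G}} :=
  [set p | [&& p.1 \in qverts xi, p.2 \in qverts xi &
             [exists a in p.1, exists b in p.2, arc a b]]].

Definition quotient_digraph (G H : digraph) (xi : G -> H) :=
  (qverts xi, qarcs xi).

Definition Theta (G H H' : digraph) (xi : G -> H) : {set {ffun G -> H'}} :=
  [set z : {ffun G -> H'} | is_hom z && (quotient_digraph z == quotient_digraph xi)].

Definition isomorphic (G H : digraph) : Prop :=
  exists f : G -> H, bijective f /\ forall u v : G, arc (f u) (f v) = arc u v.

Definition reps (D' Dr : digraph -> Prop) : Prop :=
  [/\ forall G, Dr G -> D' G,
      forall G, D' G -> exists2 G', Dr G' & isomorphic G G'
    & forall G1 G2, Dr G1 -> Dr G2 -> isomorphic G1 G2 -> G1 = G2].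

Definition hom_scheme (Dr : digraph -> Prop) (R S : digraph) :=
  forall G : digraph, Dr G -> homs G R -> homs G S.

Definition strong_scheme Dr R S (rho : hom_scheme Dr R S) : Prop :=
  forall G (hG : Dr G), injective (rho G hG).

Definition Gamma_scheme Dr R S (rho : hom_scheme Dr R S) : Prop :=
  forall G (hG : Dr G) (xi : homs G R) (v : G),
    Gam (val (rho G hG xi)) v = Gam (val xi) v.

Definition Gamma_below Dr R S : Prop :=
  exists rho : hom_scheme Dr R S, strong_scheme rho /\ Gamma_scheme rho.

(* Main.v *)
Require Import Defs.
From mathcomp Require Import all_boot.
Set Implicit Arguments. Unset Strict Implicit.

Lemma connect_homo (T T' : finType) (e : rel T) (e' : rel T') (h : T -> T') :
  (forall x y, e x y -> e' (h x) (h y)) -> forall x y, connect e x y -> connect e' (h x) (h y).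
Proof.
move=> he x y /connectP[p pp ->]; elim: p x pp => [|a p IH] x /=; first by move=> _; exact: connect0.
case/andP=> exa pa; exact: connect_trans (connect1 (he _ _ exa)) (IH _ pa).
Qed.

Lemma Gam_self (G H : digraph) (xi : G -> H) v : v \in Gam xi v.
Proof. by rewrite /Gam /gammaX !inE eqxx /= connect0. Qed.

Lemma Gam_mem_eq (G H : digraph) (xi : G -> H) u v : v \in Gam xi u -> Gam xi v = Gam xi u.
Proof.
rewrite /Gam /gammaX inE => /andP[]; rewrite inE => /eqP hv hc.
have ->: [set w | xi w == xi v] = [set w | xi w == xi u] by apply/setP => w; rewrite !inE hv.
have sym : connect_sym (fun x y => [&& x \in [set w | xi w == xi u], y \in [set w | xi w == xi u] & adj x y]).
  apply: sym_connect_sym => x y; rewrite andbCA.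
  by congr (_ && (_ && _)); rewrite /adj orbC.
apply/setP => w; rewrite !inE; congr (_ && _); apply/idP/idP => h.
  exact: connect_trans hc h.
by rewrite sym in hc; exact: connect_trans hc h.
Qed.

Lemma quotE (G H H' : digraph) (z : G -> H') (xi : G -> H) :
  (quotient_digraph z == quotient_digraph xi) = [forall v, Gam z v == Gam xi v].
Proof.
apply/eqP/forallP.
  case=> hq _ v.
  have: Gam z v \in qverts xi by rewrite -hq; apply/imsetP; exists v.
  case/imsetP => u _ e.
  have hv: v \in Gam xi u by rewrite -e Gam_self.
  by rewrite e (Gam_mem_eq hv).
move=> h.
have hq: qverts z = qverts xi by rewrite /qverts; apply: eq_imset => v; exact/eqP.
by rewrite /quotient_digraph /qarcs hq.
Qed.

Lemma ThetaE (G H H' : digraph) (xi : G -> H) (z : {ffun G -> H'}) :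
  (z \in Theta H' xi) = is_hom z && [forall v, Gam z v == Gam xi v].
Proof. by rewrite inE quotE. Qed.

Lemma Gam_comp (G G' H : digraph) (g : G' -> G) (f : G -> G')
  (gK : cancel g f) (fK : cancel f g) (hg : forall a b : G', Defs.arc (g a) (g b) = Defs.arc a b)
  (z : G -> H) v : Gam (fun x => z (g x)) v = [set w | g w \in Gam z (g v)].
Proof.
apply/setP => w; rewrite /Gam /gammaX !inE /=; congr andb; apply/idP/idP.
  move/(connect_homo (h := g)); apply => x y; rewrite !inE /adj !hg; done.
move/(connect_homo (h := f)); rewrite !gK; apply => x y; rewrite !inE /adj -!hg !fK; done.
Qed.

Lemma Gam_ext (G H : digraph) (f1 f2 : G -> H) : f1 =1 f2 -> forall v, Gam f1 v = Gam f2 v.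
Proof.
move=> h v; apply/setP => w; rewrite /Gam /gammaX !inE !h; congr andb.
by apply: eq_connect => x y; rewrite !inE !h.
Qed.

Lemma Theta_Gam (G H1 H2 H' : digraph) (f1 : G -> H1) (f2 : G -> H2) :
  (forall v, Gam f1 v = Gam f2 v) -> Theta H' f1 = Theta H' f2.
Proof.
move=> h; apply/setP => z; rewrite !ThetaE; congr andb.
by apply: eq_forallb => v; rewrite h.
Qed.

Lemma Theta_self (G H : digraph) (xi : homs G H) : val xi \in Theta H (val xi).
Proof. by rewrite ThetaE (valP xi); apply/forallP => v. Qed.

Lemma card_transport (G G' H H' : digraph) (f : G -> G') (g : G' -> G)
  (fK : cancel f g) (gK : cancel g f)
  (harc : forall u v : G, Defs.arc (f u) (f v) = Defs.arc u v) (xi : G -> H) :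
  #|Theta H' xi| <= #|Theta H' (fun x => xi (g x))|.
Proof.
have hg : forall a b : G', Defs.arc (g a) (g b) = Defs.arc a b.
  by move=> a b; rewrite -harc !gK.
pose m (z : {ffun G -> H'}) : {ffun G' -> H'} := [ffun x => z (g x)].
have inj: injective m.
  move=> z1 z2 /ffunP h; apply/ffunP => v; have := h (f v); by rewrite !ffunE fK.
rewrite -(card_imset _ inj); apply: subset_leq_card; apply/subsetP => _ /imsetP[z zin ->].
rewrite ThetaE in zin; case/andP: zin => hz /forallP hG; rewrite ThetaE.
apply/andP; split.
  apply/forallP => a; apply/forallP => b; rewrite !ffunE; apply/implyP; rewrite -hg => ab.
  exact: (implyP (forallP (forallP hz (g a)) (g b)) ab).
apply/forallP => v.
rewrite (Gam_ext (f1 := m z) (f2 := fun x => z (g x))); last by move=> x; rewrite ffunE.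
by rewrite (Gam_comp gK fK hg) (Gam_comp gK fK hg) (eqP (hG _)).
Qed.

Theorem lemma2 (R S : digraph) (D' Dr : digraph -> Prop) :
  reps D' Dr ->
  (Gamma_below Dr R S <->
   forall G : digraph, D' G -> forall xi : homs G R,
     #|Theta R (val xi)| <= #|Theta S (val xi)|).
Proof.
move=> [DrD' Drep Duniq]; split.
- case=> rho [rinj gs] G hG xi.
  case: (Drep G hG) => G' hG' [f [[g fK gK] harc]].
  have hg : forall a b : G', Defs.arc (g a) (g b) = Defs.arc a b.
    by move=> a b; rewrite -harc !gK.
  pose xi' : {ffun G' -> R} := [ffun x => val xi (g x)].
  have hxi' : is_hom xi'.
    apply/forallP => a; apply/forallP => b; rewrite !ffunE; apply/implyP; rewrite -hg => ab.
    exact: (implyP (forallP (forallP (valP xi) (g a)) (g b)) ab).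
  have e1 : Theta R (fun x => val xi (g x)) = Theta R xi'.
    by apply: Theta_Gam; apply: Gam_ext => x; rewrite ffunE.
  have e3 : Theta S (fun x => xi' (f x)) = Theta S (val xi).
    by apply: Theta_Gam; apply: Gam_ext => x; rewrite ffunE fK.
  apply: leq_trans (card_transport R fK gK harc (val xi)) _.
  rewrite e1 -e3.
  apply: leq_trans (card_transport S gK fK hg xi').
  pose m (z : {ffun G' -> R}) : {ffun G' -> S} :=
    if insub z is Some h then val (rho G' hG' h) else val (rho G' hG' (exist _ xi' hxi')).
  have mE : forall z (hz : is_hom z), m z = val (rho G' hG' (exist _ z hz)).
    move=> z hz; rewrite /m insubT //.
  have minj : {in Theta R xi' &, injective m}.
    move=> z1 z2; rewrite !ThetaE => /andP[h1 _] /andP[h2 _].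
    rewrite (mE _ h1) (mE _ h2) => /val_inj /rinj; by case.
  rewrite -(card_in_imset minj); apply: subset_leq_card; apply/subsetP => _ /imsetP[z zin ->].
  move: (zin); rewrite ThetaE => /andP[hz /forallP hG2].
  rewrite (mE _ hz) ThetaE (valP (rho G' hG' _)) /=; apply/forallP => v.
  by rewrite gs /= (eqP (hG2 v)).
- move=> hineq.
  have mk : forall G (hG : Dr G) (xi : homs G R),
      {z : homs G S | val z \in Theta S (val xi) /\
        forall d, val z = nth d (enum (Theta S (val xi))) (index (val xi) (enum (Theta R (val xi))))}.
    move=> G hG xi.
    have hi : index (val xi) (enum (Theta R (val xi))) < #|Theta S (val xi)|.
      apply: leq_trans (hineq G (DrD' G hG) xi).
      by rewrite cardE index_mem mem_enum Theta_self.
    case: (pickP (mem (Theta S (val xi)))) => [z0 hz0|none]; last first.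
      exfalso; move: hi; by rewrite (eq_card0 none).
    have hin : nth z0 (enum (Theta S (val xi))) (index (val xi) (enum (Theta R (val xi)))) \in Theta S (val xi).
      by rewrite -mem_enum mem_nth // -cardE.
    have hh := hin; rewrite ThetaE in hh; case/andP: hh => hh _.
    exists (@exist _ (@is_hom G S) _ hh); split => //= d.
    by apply: set_nth_default; rewrite -cardE.
  exists (fun G hG xi => sval (mk G hG xi)); split.
  + move=> G hG x1 x2 /= e.
    have [in1 n1] := svalP (mk G hG x1); have [in2 n2] := svalP (mk G hG x2).
    move: e in1 in2 n1 n2.
    set y1 := sval (mk G hG x1); set y2 := sval (mk G hG x2); clearbody y1 y2.
    move=> e; subst y2 => in1 in2 n1 n2.
    have gg : forall v, Gam (val x1) v = Gam (val x2) v.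
      move: in1 in2; rewrite !ThetaE => /andP[_ /forallP a1] /andP[_ /forallP a2] v.
      by rewrite -(eqP (a1 v)) -(eqP (a2 v)).
    have eR := Theta_Gam R gg; have eS := Theta_Gam S gg.
    have v1 := n1 (val y1); have v2 := n2 (val y1).
    rewrite {1}v1 eR eS in v2.
    have m1 : val x1 \in enum (Theta R (val x2)) by rewrite -eR mem_enum Theta_self.
    have m2 : val x2 \in enum (Theta R (val x2)) by rewrite mem_enum Theta_self.
    have hi1 : index (val x1) (enum (Theta R (val x2))) < size (enum (Theta S (val x2))).
      rewrite -cardE; apply: leq_trans (hineq G (DrD' G hG) x2).
      by rewrite cardE index_mem.
    have hi2 : index (val x2) (enum (Theta R (val x2))) < size (enum (Theta S (val x2))).
      rewrite -cardE; apply: leq_trans (hineq G (DrD' G hG) x2).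
      by rewrite cardE index_mem.
    move/eqP: v2; rewrite nth_uniq ?enum_uniq // => /eqP ei.
    apply: val_inj.
    rewrite -(nth_index (val x1) m1) ei (set_nth_default (val x2)) ?nth_index //.
    by rewrite index_mem.
  + move=> G hG xi v.
    case: (svalP (mk G hG xi)) => hin _; move: hin; rewrite ThetaE => /andP[_ /forallP h].
    exact/eqP.
Qed.
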